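(* Let $H$ be a graph. Then there exists a local metric basis of $K_1+H$ containing the vertex of $K_1$ if and only if $H\in\mathcal{G}$.
   Context: All graphs are finite and simple with at least one vertex. $K_1+H$ is the join: a new vertex joined by edges to every vertex of $H$. $d_G$ is shortest-path distance ($+\infty$ between components), $d_{G,2}=\min\{d_G,2\}$; $s$ distinguishes $x,y$ w.r.t. $d$ if $d(s,x)\ne d(s,y)$. A local metric basis of a connected graph $G$ is a minimum-size set $S\subseteq V(G)$ such that any two adjacent vertices are distinguished w.r.t. $d_G$ by some vertex of $S$. A local adjacency basis of $H$ is a minimum-size set $S\subseteq V(H)$ such that any two adjacent vertices are distinguished w.r.t. $d_{H,2}$ by some vertex of $S$. $\mathcal{G}$: class of graphs $H$ such that every local adjacency basis $B$ of $H$ satisfies $B\subseteq N_H(v)$ for some $v\in V(H)$. *)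

(* Defs.v *)
(* Finite simple graphs: symmetric irreflexive e : rel T on a finType T. *)
From mathcomp Require Import all_boot.
Set Implicit Arguments. Unset Strict Implicit. Unset Printing Implicit Defensive.

Section Graphs.
Variable T : finType.
Implicit Types (e : rel T) (S : {set T}).

Definition walkn e (n : nat) (x y : T) : bool :=
  [exists p : n.-tuple T, path e x p && (last x p == y)].

(* shortest-path distance d_G; None encodes +infinity (different components).
   A shortest path has at most #|T| - 1 edges, so searching n < #|T| suffices. *)
Definition dist e (x y : T) : option nat :=
  let k := find (fun n => walkn e n x y) (iota 0 #|T|) in
  if k < #|T| then Some k else None.

Definition dist2 e (x y : T) : nat :=
  match dist e x y with Some n => minn n 2 | None => 2 end.

Definition adj_distinguishing {X : eqType} (d : T -> T -> X) e S : Prop :=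
  forall x y, e x y -> exists2 s, s \in S & d s x != d s y.

Definition local_metric_basis e S : Prop :=
  adj_distinguishing (dist e) e S /\
  forall S', adj_distinguishing (dist e) e S' -> #|S| <= #|S'|.

Definition local_adjacency_basis e S : Prop :=
  adj_distinguishing (dist2 e) e S /\
  forall S', adj_distinguishing (dist2 e) e S' -> #|S| <= #|S'|.

Definition open_nbhd e (v : T) : {set T} := [set u | e v u].

Definition in_classG e : Prop :=
  forall B, local_adjacency_basis e B -> exists v, B \subset open_nbhd e v.

End Graphs.

(* join K_1 + H: vertex set option T, the new vertex is None *)
Definition join_K1 (T : finType) (e : rel T) : rel (option T) :=
  fun u v => match u, v with
             | Some x, Some y => e x y
             | None, Some _ | Some _, None => true
             | None, None => false
             end.

(* Main.v *)
Require Import Defs.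
From mathcomp Require Import all_boot.
Set Implicit Arguments. Unset Strict Implicit. Unset Printing Implicit Defensive.

Lemma find_iota_eq (p : pred nat) N k :
  k < N -> p k -> (forall j, j < k -> ~~ p j) -> find p (iota 0 N) = k.
Proof.
move=> kN pk hk.
have hh : has p (iota 0 N) by apply/hasP; exists k => //; rewrite mem_iota.
have fl : find p (iota 0 N) < N by move: hh; rewrite has_find size_iota.
have pf : p (find p (iota 0 N)) by have := nth_find 0 hh; rewrite nth_iota.
case: (ltngtP (find p (iota 0 N)) k) => // h.
  by have := hk _ h; rewrite pf.
by have := before_find 0 h; rewrite nth_iota // pk.
Qed.

Section Gen.
Variable V : finType.
Variable g : rel V.

Lemma dist_some x y k : k < #|V| -> walkn g k x y ->
  (forall j, j < k -> ~~ walkn g j x y) -> dist g x y = Some k.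
Proof. by move=> kV w h; rewrite /dist (find_iota_eq kV w h) kV. Qed.

Lemma dist_walk x y k : dist g x y = Some k -> walkn g k x y.
Proof.
rewrite /dist; case: ifP => // hlt [<-].
have hh : has (fun n => walkn g n x y) (iota 0 #|V|).
  by rewrite has_find size_iota.
by have := nth_find 0 hh; rewrite nth_iota.
Qed.

Lemma walkn0 x y : walkn g 0 x y = (x == y).
Proof.
apply/existsP/eqP => [[p]|->].
  by rewrite tuple0 /= => /eqP.
by exists [tuple] => /=.
Qed.

Lemma walkn1 x y : walkn g 1 x y = g x y.
Proof.
apply/existsP/idP => [[p]|h].
  case: p => s; case: s => [|a [|b s]] //= _ /andP[/andP[h _] /eqP <-] //.
by exists [tuple y] => /=; rewrite h eqxx.
Qed.

Lemma walkn2 x z y : g x z -> g z y -> walkn g 2 x y.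
Proof. by move=> h1 h2; apply/existsP; exists [tuple z; y] => /=; rewrite h1 h2 eqxx. Qed.

Definition lvl x y := if x == y then 0 else if g x y then 1 else 2.

Lemma card2 (x y : V) : x != y -> 1 < #|V|.
Proof. by move=> xy; have := max_card (mem [set x; y]); rewrite cards2 xy. Qed.

Lemma dist_lvl x y : lvl x y < #|V| ->
  (lvl x y = 2 -> exists z, g x z && g z y) -> dist g x y = Some (lvl x y).
Proof.
move=> hc h2; apply: dist_some => //; move: hc h2; rewrite /lvl;
  case: eqP => [->|nxy] hc h2; try by rewrite walkn0 eqxx.
- case: ifP => gxy; first by rewrite walkn1 gxy.
  rewrite gxy in h2; have [z /andP[h1 h2']] := h2 erefl; exact: walkn2 h1 h2'.
- by [].
- case: ifP => gxy.
    by move=> [|j] // _; rewrite walkn0; apply/eqP.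
  by move=> [|[|j]] // _; rewrite ?walkn0 ?walkn1 ?gxy //; apply/eqP.
Qed.

End Gen.

Section Main.
Variable T : finType.
Variable e : rel T.
Hypothesis esym : symmetric e.
Hypothesis eirr : irreflexive e.
Hypothesis Tpos : 0 < #|T|.

Local Notation G := (join_K1 e).

Lemma dist2_lvl s x : dist2 e s x = lvl e s x.
Proof.
rewrite /dist2 /lvl; case: eqP => [->|nsx].
  by rewrite (@dist_some _ e x x 0) // walkn0.
case: ifP => esx.
  rewrite (@dist_some _ e s x 1) //.
  - by apply: (@card2 _ s x); apply/eqP.
  - by rewrite walkn1.
  by move=> [|j] // _; rewrite walkn0; apply/eqP.
case hd: (dist e s x) => [k|] //.
have := dist_walk hd; case: k hd => [|[|k]] hd.
- by rewrite walkn0 => /eqP.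
- by rewrite walkn1 esx.
- by move=> _; apply/minn_idPr.
Qed.

Lemma distG u v : dist G u v = Some (lvl G u v).
Proof.
apply: dist_lvl.
  rewrite card_option /lvl; case: eqP => // nuv; case: ifP => // guv.
  case: u v nuv guv => [a|] [b|] //= nab _.
  by apply: card2 (a) (b) _; apply/eqP => h; apply: nab; rewrite h.
rewrite /lvl; case: eqP => // nuv; case: ifP => // guv _.
by case: u v nuv guv => [a|] [b|] //= _ _; exists None.
Qed.

Lemma lvlG_SS s x : lvl G (Some s) (Some x) = lvl e s x.
Proof. by rewrite /lvl /=. Qed.

Definition RH (B : {set T}) := adj_distinguishing (dist2 e) e B.
Definition RG (S : {set option T}) := adj_distinguishing (dist G) G S.
Definition SH (S : {set option T}) : {set T} := [set x | Some x \in S].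

Lemma someK_inj : injective (@Some T). Proof. by move=> a b [->]. Qed.

Lemma RG_RH S : RG S -> RH (SH S).
Proof.
move=> h x y exy.
have [[s|] sS] := h (Some x) (Some y) exy; rewrite !distG.
  by rewrite !lvlG_SS -!dist2_lvl => hn; exists s; rewrite ?inE.
by rewrite /lvl /=.
Qed.

Lemma RG_nbhd S x : RG S -> None \notin S -> ~~ (SH S \subset open_nbhd e x).
Proof.
move=> h nS; apply/subsetPn.
have [[s|] sS] := h None (Some x) isT; last by rewrite sS in nS.
rewrite !distG /lvl /= => hn.
exists s; first by rewrite inE.
rewrite inE; apply/negP => exs.
have sx : s != x by apply: contraTneq exs => ->; rewrite eirr.
by move: hn; rewrite (inj_eq someK_inj) (negbTE sx) esym exs.
Qed.

Lemma RH_RG_None B : RH B -> RG (None |: Some @: B).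
Proof.
move=> h [x|] [y|] //= exy.
- have [s sB hn] := h x y exy; exists (Some s).
    by rewrite !inE mem_imset ?orbT //; apply: someK_inj.
  by rewrite !distG !lvlG_SS -!dist2_lvl.
- by exists None; rewrite ?inE ?eqxx // !distG /lvl.
- by exists None; rewrite ?inE ?eqxx // !distG /lvl.
Qed.

Lemma RH_RG B : RH B -> (forall v, ~~ (B \subset open_nbhd e v)) -> RG (Some @: B).
Proof.
move=> h hn [x|] [y|] //= exy.
- have [s sB hd] := h x y exy; exists (Some s).
    by rewrite mem_imset //; apply: someK_inj.
  by rewrite !distG !lvlG_SS -!dist2_lvl.
- have /subsetPn [s sB ns] := hn x; exists (Some s).
    by rewrite mem_imset //; apply: someK_inj.
  rewrite !distG /lvl /=; move: ns; rewrite inE esym.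
  by rewrite (inj_eq someK_inj); case: (s == x); case: (e s x) => //=.
- have /subsetPn [s sB ns] := hn y; exists (Some s).
    by rewrite mem_imset //; apply: someK_inj.
  rewrite !distG /lvl /=; move: ns; rewrite inE esym.
  by rewrite (inj_eq someK_inj); case: (s == y); case: (e s y) => //=.
Qed.

Lemma card_SH (S : {set option T}) : #|S| = #|SH S| + (None \in S).
Proof.
rewrite (cardsD1 None) addnC; congr (_ + _).
have -> : S :\ None = Some @: SH S.
  apply/setP => -[x|]; rewrite !inE //=.
    by rewrite mem_imset ?inE //; apply: someK_inj.
  by apply/Logic.eq_sym/negbTE/imsetP => -[].
by rewrite card_imset //; apply: someK_inj.
Qed.

Lemma card_lift (B : {set T}) : #|None |: Some @: B| = #|B| + 1.
Proof.
rewrite cardsU1 card_imset; last exact: someK_inj.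
have -> : None \notin Some @: B by apply/imsetP => -[].
by rewrite addnC.
Qed.

Definition RHb (B : {set T}) :=
  [forall x, forall y, e x y ==> [exists s in B, dist2 e s x != dist2 e s y]].

Lemma RHbP B : reflect (RH B) (RHb B).
Proof.
apply: (iffP forallP) => [h x y exy|h x].
  have /forallP /(_ y) := h x; rewrite exy /= => /existsP [s /andP[sB hs]].
  by exists s.
apply/forallP => y; apply/implyP => exy.
have [s sB hs] := h x y exy; apply/existsP; by exists s; rewrite sB hs.
Qed.

Lemma exists_basis : exists B, local_adjacency_basis e B.
Proof.
have hT : RHb setT.
  apply/RHbP => x y exy; exists x; rewrite ?inE // !dist2_lvl /lvl eqxx.
  have xy : x != y by apply: contraTneq exy => ->; rewrite eirr.
  by rewrite (negbTE xy) exy.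
case: (arg_minnP (fun B : {set T} => #|B|) hT) => B hB hmin.
exists B; split; first exact/RHbP.
by move=> S' /RHbP; apply: hmin.
Qed.

End Main.

Theorem proposition1 (T : finType) (e : rel T) :
  symmetric e -> irreflexive e -> 0 < #|T| ->
  ((exists S : {set option T},
      local_metric_basis (join_K1 e) S /\ None \in S)
   <-> in_classG e).
Proof.
move=> esym eirr Tpos; split.
  move=> [S [[hS hmin] nS]] B [hB Bmin].
  case: (boolP [exists v, B \subset open_nbhd e v]) => [/existsP [v hv]|hn].
    by exists v.
  exfalso.
  have hG : RG e (Some @: B).
    apply: RH_RG => // v; apply/negP => hv; move/negP: hn; apply; apply/existsP.
    by exists v.
  have := hmin _ hG; rewrite card_imset; last exact: someK_inj.
  have := Bmin _ (RG_RH Tpos hS).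
  rewrite (card_SH S) nS addn1 => h1 h2.
  by have := leq_trans h2 h1; rewrite ltnn.
move=> hcl.
have [B0 [hB0 B0min]] := exists_basis eirr Tpos.
exists (None |: Some @: B0); split; last by rewrite !inE eqxx.
split; first exact: RH_RG_None.
move=> S' hS'; rewrite card_lift (card_SH S').
have hH := RG_RH Tpos hS'.
have le := B0min _ hH.
case nS: (None \in S'); first by rewrite leq_add2r.
rewrite addn0 addn1 ltn_neqAle le andbT.
apply/negP => /eqP eq.
have [v hv] : exists v, SH S' \subset open_nbhd e v.
  apply: hcl; split => // S2 h2; rewrite -eq; exact: B0min.
have := RG_nbhd esym eirr Tpos v hS' (negbT nS).
by rewrite hv.
Qed.
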